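(* Let $G$ be an edge-coloured multigraph, $N$ a matching in $G$ and $C$ a set of colours such that for each $c \in C$ there are at least $k$ edges of $N$ which are $c$-horns in $N$. If $k|C| > 2|N|$, then there exists a $C$-rainbow horn in $N$.
   Context: Let $V$ be the vertex set of $G$. For vertex sets $X,Y$, $E[X,Y]$ is the set of edges with one endpoint in $X$ and the other in $Y$; for an edge $e=xy$, $E[e,Y]$ means $E[\{x,y\},Y]$. A horn in a matching $N$ is an edge $e \in N$ for which there exist two vertex-disjoint edges $e_1,e_2 \in E[e, V\setminus V(N)]$. It is a $c$-horn if such $e_1,e_2$ exist that are both of colour $c$, and it is a $C$-rainbow horn if such $e_1,e_2$ exist with $e_1$ of colour $c_1$ and $e_2$ of colour $c_2$ for two distinct $c_1,c_2 \in C$. *)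

(* Defs.v *)
From mathcomp Require Import all_boot.
Set Implicit Arguments. Unset Strict Implicit. Unset Printing Implicit Defensive.

(* A multigraph on vertex type V with edge type E: each edge e has
   endpoints eu e and ev e (parallel edges allowed). Colours: col : E -> K. *)
Section Horns.
Variables (V E K : finType) (eu ev : E -> V) (col : E -> K).

Definition ends (e : E) : {set V} := [set eu e; ev e].

Definition VN (N : {set E}) : {set V} := \bigcup_(e in N) ends e.

Definition is_matching (N : {set E}) : Prop :=
  forall e f, e \in N -> f \in N -> e != f -> [disjoint ends e & ends f].

Definition crossing (X Y : {set V}) (f : E) : bool :=
  ((eu f \in X) && (ev f \in Y)) || ((ev f \in X) && (eu f \in Y)).

Definition horn_with (P : K -> K -> bool) (N : {set E}) (e : E) : Prop :=
  e \in N /\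
  exists e1 e2 : E,
    [/\ crossing (ends e) (~: VN N) e1, crossing (ends e) (~: VN N) e2,
        [disjoint ends e1 & ends e2] & P (col e1) (col e2)].

Definition horn (N : {set E}) (e : E) : Prop := horn_with (fun _ _ => true) N e.

Definition c_horn (c : K) (N : {set E}) (e : E) : Prop :=
  horn_with (fun a b => (a == c) && (b == c)) N e.

Definition rainbow_horn (C : {set K}) (N : {set E}) (e : E) : Prop :=
  horn_with (fun a b => [&& a \in C, b \in C & a != b]) N e.

End Horns.

(* Main.v *)
Require Import Defs.
From mathcomp Require Import all_boot.
From Stdlib Require Import ClassicalEpsilon.
Set Implicit Arguments. Unset Strict Implicit. Unset Printing Implicit Defensive.

Section Help.
Variables (V E K : finType) (eu ev : E -> V) (col : E -> K).
Variable N : {set E}.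

Definition D (f : E) (z u : V) : bool :=
  ((eu f == z) && (ev f == u)) || ((eu f == u) && (ev f == z)).

Lemma D_ends f z u : D f z u -> ends eu ev f = [set z; u].
Proof.
rewrite /D /ends => /orP[]/andP[]/eqP-> /eqP->; first by [].
by rewrite setUC.
Qed.

Lemma in_VN e z : e \in N -> z \in ends eu ev e -> z \in VN eu ev N.
Proof. by move=> eN zE; apply/bigcupP; exists e. Qed.

Lemma crossing_D e f : crossing eu ev (ends eu ev e) (~: VN eu ev N) f ->
  exists z u, [/\ z \in ends eu ev e, u \notin VN eu ev N & D f z u].
Proof.
rewrite /crossing => /orP[]/andP[h1]; rewrite inE => h2.
  by exists (eu f), (ev f); split; rewrite // /D !eqxx.
by exists (ev f), (eu f); split; rewrite // /D !eqxx orbT.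
Qed.

Lemma D_crossing e f z u : D f z u -> z \in ends eu ev e -> u \notin VN eu ev N ->
  crossing eu ev (ends eu ev e) (~: VN eu ev N) f.
Proof.
rewrite /D /crossing => /orP[]/andP[]/eqP-> /eqP-> zE; rewrite -in_setC => uN.
  by rewrite zE uN.
by rewrite zE uN orbT.
Qed.

Lemma D_disj f g x u y v : D f x u -> D g y v -> x != y -> x != v -> u != y ->
  u != v -> [disjoint ends eu ev f & ends eu ev g].
Proof.
move=> /D_ends -> /D_ends -> xy xv uy uv.
rewrite -setI_eq0; apply/eqP/setP => w; rewrite !inE; apply/negbTE/negP.
move=> /andP[/orP[]/eqP-> /orP[]/eqP Ew];
  by move: xy xv uy uv; rewrite Ew eqxx.
Qed.

Lemma orient c e : e \in N -> eu e != ev e ->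
  c_horn eu ev col c N e ->
  exists f g u v, [/\ D f (eu e) u, D g (ev e) v, u \notin VN eu ev N,
     v \notin VN eu ev N & [/\ u != v, col f = c & col g = c]].
Proof.
move=> eN exy [_ [e1 [e2 [c1 c2 dj /andP[/eqP h1 /eqP h2]]]]].
have [z1 [u1 [z1e u1N D1]]] := crossing_D c1.
have [z2 [u2 [z2e u2N D2]]] := crossing_D c2.
have E1 := D_ends D1; have E2 := D_ends D2.
have z12 : z1 != z2.
  apply/negP => /eqP ez; have := disjointFr (x:=z1) dj.
  by rewrite E1 E2 ez !inE eqxx => /(_ isT).
have u12 : u1 != u2.
  apply/negP => /eqP ez; have := disjointFr (x:=u1) dj.
  by rewrite E1 E2 ez !inE eqxx !orbT => /(_ isT).
move: z1e z2e; rewrite !inE => /orP[]/eqP ez1 /orP[]/eqP ez2.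
- by move: z12; rewrite ez1 ez2 eqxx.
- by exists e1, e2, u1, u2; rewrite -ez1 -ez2; split.
- by exists e2, e1, u2, u1; rewrite -ez1 -ez2 eq_sym; split.
- by move: z12; rewrite ez1 ez2 eqxx.
Qed.

End Help.

Lemma card_sum (T : finType) (A B : {set T}) : A \subset B ->
  #|A| = \sum_(x in B) (x \in A).
Proof.
move=> sAB; rewrite -sum1_card big_mkcond [RHS]big_mkcond /=.
apply: eq_bigr => x _; case: (boolP (x \in A)) => xa.
  by rewrite (subsetP sAB _ xa).
by case: (x \in B).
Qed.

Section Fin.
Variables (V E K : finType) (eu ev : E -> V) (col : E -> K).
Variables (N : {set E}) (C : {set K}).

Lemma finish e f g u v ci cj : e \in N -> eu e != ev e ->
  D eu ev f (eu e) u -> D eu ev g (ev e) v -> u \notin VN eu ev N ->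
  v \notin VN eu ev N -> u != v -> col f = ci -> col g = cj ->
  ci \in C -> cj \in C -> ci != cj ->
  exists e, rainbow_horn eu ev col C N e.
Proof.
move=> eN exy Df Dg uN vN uv hf hg ciC cjC cij.
have xV : eu e \in VN eu ev N by apply: (in_VN eN); rewrite !inE eqxx.
have yV : ev e \in VN eu ev N by apply: (in_VN eN); rewrite !inE eqxx orbT.
exists e; split => //; exists f, g; split.
- by apply: (D_crossing Df) => //; rewrite !inE eqxx.
- by apply: (D_crossing Dg) => //; rewrite !inE eqxx orbT.
- apply: (D_disj Df Dg) => //.
    by apply/eqP => h; move: vN; rewrite -h xV.
  by apply/eqP => h; move: uN; rewrite h yV.
- by rewrite hf hg ciC cjC cij.
Qed.
End Fin.

Theorem lemma2p2 (V E K : finType) (eu ev : E -> V) (col : E -> K)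
  (loopless : forall e : E, eu e != ev e)
  (N : {set E}) (HN : is_matching eu ev N)
  (C : {set K}) (k : nat)
  (Hk : forall c, c \in C ->
        exists S : {set E}, [/\ S \subset N, k <= #|S| &
                               forall e, e \in S -> c_horn eu ev col c N e])
  (Hsize : 2 * #|N| < k * #|C|) :
  exists e : E, rainbow_horn eu ev col C N e.
Proof.
pose hb c e := if excluded_middle_informative (c_horn eu ev col c N e)
               then true else false.
have hbP c e : hb c e -> c_horn eu ev col c N e.
  by rewrite /hb; case: excluded_middle_informative.
pose T c := [set e in N | hb c e].
have TN c : T c \subset N by apply/subsetP => x; rewrite inE => /andP[].
have HT c : c \in C -> k <= #|T c|.
  move=> cC; have [S [SN kS HS]] := Hk c cC.
  apply: (leq_trans kS); apply: subset_leq_card; apply/subsetP => x xS.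
  rewrite inE (subsetP SN _ xS) /= /hb.
  by case: excluded_middle_informative => // hn; exfalso; exact: hn (HS x xS).
pose A e := [set c in C | e \in T c].
have AC e : A e \subset C by apply/subsetP => x; rewrite inE => /andP[].
case: (boolP [exists e in N, 2 < #|A e|]); last first.
  move/exists_inPn => H; exfalso.
  have : k * #|C| <= 2 * #|N|.
    rewrite mulnC -sum_nat_const mulnC -sum_nat_const.
    apply: (@leq_trans (\sum_(c in C) #|T c|)); first by apply: leq_sum => c /HT.
    rewrite (eq_bigr (fun c => \sum_(e in N) (e \in T c))); last first.
      by move=> c _; apply: card_sum.
    rewrite exchange_big /=.
    apply: leq_sum => e eN.
    have -> : \sum_(i in C) (e \in T i) = #|A e|.
      by rewrite (card_sum (AC e)); apply: eq_bigr => c cC; rewrite !inE cC.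
    by have := H e eN; rewrite ltnNge negbK.
  by rewrite leqNgt Hsize.
case/exists_inP => e eN /card_gt2P [c1 [c2 [c3 [[h1 h2 h3] [d12 d23 d31]]]]].
have hor c : c \in A e -> c \in C /\ c_horn eu ev col c N e.
  by rewrite !inE => /andP[cC /andP[_ hh]]; split; last exact: hbP.
have [C1 H1] := hor _ h1; have [C2 H2] := hor _ h2; have [C3 H3] := hor _ h3.
have lp := loopless e.
have [f1 [g1 [u1 [v1 [D1 D1' U1 V1 [uv1 cf1 cg1]]]]]] := orient eN lp H1.
have [f2 [g2 [u2 [v2 [D2 D2' U2 V2 [uv2 cf2 cg2]]]]]] := orient eN lp H2.
have [f3 [g3 [u3 [v3 [D3 D3' U3 V3 [uv3 cf3 cg3]]]]]] := orient eN lp H3.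
case: (eqVneq u1 v2) => [e12|n12].
  2: by apply: (finish eN lp D1 D2' U1 V2 n12 cf1 cg2).
case: (eqVneq u2 v1) => [e21|n21].
  2: by apply: (finish eN lp D2 D1' U2 V1 n21 cf2 cg1); rewrite // eq_sym.
case: (eqVneq u3 v1) => [e31|n31].
  2: by apply: (finish eN lp D3 D1' U3 V1 n31 cf3 cg1); rewrite // eq_sym.
have n32 : u3 != v2 by rewrite e31 -e12 eq_sym.
by apply: (finish eN lp D3 D2' U3 V2 n32 cf3 cg2); rewrite // eq_sym.
Qed.
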